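(* For all $0<q<1$, the Chern character of the Fredholm module $(\mathcal{A}(S^2_q),\mathcal{H},F)$ associated to the spectral triple $(\mathcal{A}(S^2_q),\mathcal{H},D)$ pairs with the class of the projector $$p'=\frac{1}{2}\begin{pmatrix}1+b & a^* \\ a & 1-q^{-2}b\end{pmatrix}\in\mathcal{A}(S^2_q)\otimes\mathrm{Mat}_2(\mathbb{C})$$ to give $\mathrm{ch}^F([p'])=-1$. In particular the Chern character of this spectral triple is non-trivial.
   Context: Let $0<q<1$ and let $\mathcal{A}(S^2_q)$ be the $*$-algebra of the equatorial Podleś sphere, generated by $a,a^*$ and $b=b^*$ with relations $ba=q^2ab$, $a^*a+b^2=1$, $q^4aa^*+b^2=q^4$. Let $\hat{\mathcal{H}}$ be the Hilbert space with orthonormal basis $\ket{l,m}$, $l\in\mathbb{N}+\tfrac12$, $m=-l,\dots,l$, and $\mathcal{H}=\hat{\mathcal{H}}\otimes\mathbb{C}^2=\mathcal{H}_+\oplus\mathcal{H}_-$. Let $\pi=\pi_+\oplus\pi_-$ be the spin representation of Dąbrowski–Landi–Paschke–Sitarz, where with $[x]=(q^x-q^{-x})/(q-q^{-1})$, $\pi_\pm(a)\ket{l,m}=q^{m-l-\frac12}\frac{\sqrt{[l+m+1][l+m+2]}}{[2l+2]}\ket{l+1,m+1}-q^{m+l+\frac12}\frac{\sqrt{[l-m-1][l-m]}}{[2l]}\ket{l-1,m+1}\pm\frac{(1+q^2)q^{m-\frac12}}{[2l][2l+2]}\sqrt{[l+m+1][l-m]}\ket{l,m+1}$, $\pi_\pm(b)\ket{l,m}=-q^{m+1}\frac{\sqrt{[l+m+1][l-m+1]}}{[2l+2]}\ket{l+1,m}-q^{m+1}\frac{\sqrt{[l+m][l-m]}}{[2l]}\ket{l-1,m}\pm\frac{[l-m+1][l+m]-q^2[l-m][l+m+1]}{[2l][2l+2]}\ket{l,m}$.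 The Dirac operator is $D=|D|\otimes F$ with $|D|\ket{l,m}=(l+\tfrac12)\ket{l,m}$ and $F=\begin{pmatrix}0&1\\1&0\end{pmatrix}$, grading $\gamma=\mathrm{diag}(1,-1)$. With $\rho_-=(\pi_+-\pi_-)/2$, the commutator $[F,\pi(x)]=2\rho_-(x)\otimes\begin{pmatrix}0&-1\\1&0\end{pmatrix}$ is trace class, so the cocycle $\mathrm{ch}^F_0(x)=\tfrac12\mathrm{Trace}(\gamma F[F,\pi(x)])=2\,\mathrm{Trace}_{\hat{\mathcal{H}}}\rho_-(x)$ is well defined, and its pairing with $[p']$ equals the index of $p'Fp'$. *)

(* Defs.v *)
From Stdlib Require Import Reals Lra Bool.
From Coquelicot Require Import Coquelicot.
Open Scope R_scope.
Open Scope bool_scope.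
Open Scope R_scope.

Definition qnum (q x : R) : R := (Rpower q x - Rpower q (- x)) / (q - / q).

(** Orthonormal basis |l,m> of \hat H, l in N + 1/2, m = -l..l,
    indexed by (n,k) with l = n + 1/2 and m = k - l, 0 <= k <= 2n+1. *)
Definition lval (n : nat) : R := INR n + / 2.
Definition mval (n k : nat) : R := INR k - lval n.
Definition valid (n k : nat) : bool := Nat.leb k (2 * n + 1).

(** Matrix coefficient <n',k'| pi_s(b) |n,k>, s = +1 or -1 (for pi_+ / pi_-). *)
Definition pi_b (q s : R) (n k n' k' : nat) : R :=
  let l := lval n in let m := mval n k in
  if negb (valid n k && valid n' k') then 0 else
  if Nat.eqb n' (S n) && Nat.eqb k' (S k) then
    - Rpower q (m + 1) * sqrt (qnum q (l + m + 1) * qnum q (l - m + 1)) / qnum q (2 * l + 2)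
  else if Nat.eqb (S n') n && Nat.eqb (S k') k then
    - Rpower q (m + 1) * sqrt (qnum q (l + m) * qnum q (l - m)) / qnum q (2 * l)
  else if Nat.eqb n' n && Nat.eqb k' k then
    s * (qnum q (l - m + 1) * qnum q (l + m) - q ^ 2 * qnum q (l - m) * qnum q (l + m + 1))
      / (qnum q (2 * l) * qnum q (2 * l + 2))
  else 0.

Definition pi_a (q s : R) (n k n' k' : nat) : R :=
  let l := lval n in let m := mval n k in
  if negb (valid n k && valid n' k') then 0 else
  if Nat.eqb n' (S n) && Nat.eqb k' (S (S k)) then
    Rpower q (m - l - / 2) * sqrt (qnum q (l + m + 1) * qnum q (l + m + 2)) / qnum q (2 * l + 2)
  else if Nat.eqb (S n') n && Nat.eqb k' k then
    - Rpower q (m + l + / 2) * sqrt (qnum q (l - m - 1) * qnum q (l - m)) / qnum q (2 * l)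
  else if Nat.eqb n' n && Nat.eqb k' (S k) then
    s * (1 + q ^ 2) * Rpower q (m - / 2) / (qnum q (2 * l) * qnum q (2 * l + 2))
      * sqrt (qnum q (l + m + 1) * qnum q (l - m))
  else 0.

(** pi_s(a-star) = adjoint of pi_s(a); coefficients are real, so it is the transpose. *)
Definition pi_astar (q s : R) (n k n' k' : nat) : R := pi_a q s n' k' n k.

Definition pi_one (n k n' k' : nat) : R :=
  if valid n k && Nat.eqb n' n && Nat.eqb k' k then 1 else 0.

(** Elements of the linear span of 1, a, a-star, b in A(S^2_q)
    (enough to write the entries of p'). *)
Record elt := mkElt { c_one : R; c_a : R; c_astar : R; c_b : R }.

Definition pi_s (q s : R) (x : elt) (n k n' k' : nat) : R :=
  c_one x * pi_one n k n' k' + c_a x * pi_a q s n k n' k'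
  + c_astar x * pi_astar q s n k n' k' + c_b x * pi_b q s n k n' k'.

Definition rho_minus (q : R) (x : elt) (n k n' k' : nat) : R :=
  (pi_s q 1 x n k n' k' - pi_s q (-1) x n k n' k') / 2.

Definition diag_shell (T : nat -> nat -> nat -> nat -> R) (n : nat) : R :=
  sum_f_R0 (fun k => T n k n k) (2 * n + 1).
Definition absdiag_shell (T : nat -> nat -> nat -> nat -> R) (n : nat) : R :=
  sum_f_R0 (fun k => Rabs (T n k n k)) (2 * n + 1).

Definition Trace (T : nat -> nat -> nat -> nat -> R) : R := Series (diag_shell T).

Definition ch0 (q : R) (x : elt) : R := 2 * Trace (rho_minus q x).

Definition pprime (q : R) (i j : nat) : elt :=
  match i, j with
  | O, O => mkElt (/2) 0 0 (/2)
  | O, _ => mkElt 0 0 (/2) 0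
  | _, O => mkElt 0 (/2) 0 0
  | _, _ => mkElt (/2) 0 0 (- / (2 * q ^ 2))
  end.

Definition chern_pairing (q : R) (p : nat -> nat -> elt) : R :=
  ch0 q (p 0%nat 0%nat) + ch0 q (p 1%nat 1%nat).

(* Main.v *)
Require Import Defs.
From Stdlib Require Import Reals Lra Lia.
From Coquelicot Require Import Coquelicot.
Open Scope R_scope.

Section S.
Variable q : R.
Hypothesis hq0 : 0 < q.
Hypothesis hq1 : q < 1.

Definition qn (j : nat) : R := (q ^ j - / q ^ j) / (q - / q).

Definition D (n k : nat) : R :=
  (qnum q (lval n - mval n k + 1) * qnum q (lval n + mval n k)
   - q ^ 2 * qnum q (lval n - mval n k) * qnum q (lval n + mval n k + 1))
  / (qnum q (2 * lval n) * qnum q (2 * lval n + 2)).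

Lemma diag_rho x n k : (k <= 2 * n + 1)%nat ->
  rho_minus q x n k n k = c_b x * D n k.
Proof.
  intro Hk.
  assert (Hv : valid n k = true) by (apply Nat.leb_le; lia).
  assert (E1 : Nat.eqb n (S n) = false) by (apply Nat.eqb_neq; lia).
  assert (E2 : Nat.eqb (S n) n = false) by (apply Nat.eqb_neq; lia).
  assert (E3 : Nat.eqb k (S k) = false) by (apply Nat.eqb_neq; lia).
  assert (E4 : Nat.eqb k (S (S k)) = false) by (apply Nat.eqb_neq; lia).
  assert (E5 : Nat.eqb (S k) k = false) by (apply Nat.eqb_neq; lia).
  unfold rho_minus, pi_s, pi_one, pi_astar, pi_a, pi_b, D.
  rewrite Hv, E1, E2, E3, E4, E5, !Nat.eqb_refl. cbn [negb andb].
  cbv zeta. unfold Rdiv.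
  generalize (/ (qnum q (2 * lval n) * qnum q (2 * lval n + 2))). intro r. field.
Qed.

Lemma qnum_nat j : qnum q (INR j) = qn j.
Proof. unfold qnum, qn. rewrite Rpower_Ropp, Rpower_pow by lra. reflexivity. Qed.

Lemma D_nat n k : (k <= 2 * n + 1)%nat ->
  D n k = (qn (2*n+2-k) * qn k - q^2 * qn (2*n+1-k) * qn (S k)) / (qn (2*n+1) * qn (2*n+3)).
Proof.
  intro Hk. unfold D.
  replace (lval n - mval n k + 1) with (INR (2*n+2-k))
    by (rewrite minus_INR by lia; rewrite plus_INR, mult_INR; unfold mval, lval; simpl; lra).
  replace (lval n + mval n k + 1) with (INR (S k)) by (rewrite S_INR; unfold mval, lval; lra).
  replace (lval n + mval n k) with (INR k) by (unfold mval, lval; lra).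
  replace (lval n - mval n k) with (INR (2*n+1-k))
    by (rewrite minus_INR by lia; rewrite plus_INR, mult_INR; unfold mval, lval; simpl; lra).
  replace (2 * lval n + 2) with (INR (2*n+3)) by (rewrite plus_INR, mult_INR; unfold lval; simpl; lra).
  replace (2 * lval n) with (INR (2*n+1)) by (rewrite plus_INR, mult_INR; unfold lval; simpl; lra).
  rewrite !qnum_nat. reflexivity.
Qed.

Lemma qmq : q - / q <> 0.
Proof.
  intro H. assert (q * q = 1).
  { replace (q*q) with (q * q - q * (q - /q)) by (rewrite H; ring). field. lra. }
  nra.
Qed.

Lemma powpos j : 0 < q ^ j.
Proof. apply pow_lt; lra. Qed.

Lemma powne j : q ^ j <> 0.
Proof. generalize (powpos j); lra. Qed.

Lemma powlt1 j : (0 < j)%nat -> q ^ j < 1.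
Proof.
  intro Hj. destruct j as [|j]; [lia|].
  induction j as [|j IH]. simpl; lra.
  change (q ^ S (S j)) with (q * q ^ S j).
  assert (0 < q ^ S j) by apply powpos. assert (q ^ S j < 1) by (apply IH; lia). nra.
Qed.

Lemma qn_ne j : (0 < j)%nat -> q ^ j - / q ^ j <> 0.
Proof.
  intro Hj. generalize (powlt1 j Hj) (powpos j); intros H1 H2.
  assert (1 < / q ^ j).
  { rewrite <- Rinv_1. apply Rinv_lt_contravar; lra. }
  lra.
Qed.

Lemma pow_sub M k : (k <= M)%nat -> q ^ (M - k) = q ^ M / q ^ k.
Proof.
  intro H. replace M with ((M - k) + k)%nat at 2 by lia.
  rewrite pow_add. field. apply powne.
Qed.

Definition hh (A y : R) := (A / y - y / A) * (y - / y) / (q - / q) ^ 2.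
Definition Gc (A : R) (K : nat) (x : R) :=
  ((INR K + 1) * (A + / A) - A * (/ (x ^ 2 * q ^ 2) - 1) / (/ q ^ 2 - 1)
   - / A * (x ^ 2 * q ^ 2 - 1) / (q ^ 2 - 1)) / (q - / q) ^ 2.

Lemma q2ne : q ^ 2 - 1 <> 0.
Proof. generalize (powlt1 2 ltac:(lia)); lra. Qed.
Lemma q2ne' : / q ^ 2 - 1 <> 0.
Proof.
  generalize (powlt1 2 ltac:(lia)) (powpos 2); intros.
  assert (1 < / q ^ 2) by (rewrite <- Rinv_1; apply Rinv_lt_contravar; lra). lra.
Qed.

Lemma FsumC A c K : A <> 0 ->
  sum_f_R0 (fun k => hh A (q ^ k) + c * hh A (q ^ S k)) K
  = (1 + c) * Gc A K (q ^ K) + c * hh A (q ^ S K).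
Proof.
  intro HA. generalize qmq q2ne q2ne'; intros N1 N2 N3.
  assert (q <> 0) by lra.
  assert (N4 : q * q - 1 <> 0) by (simpl in N2; lra).
  assert (N5 : 1 - q * q <> 0) by (simpl in N2; lra).
  induction K as [|K IH].
  - simpl. unfold hh, Gc. simpl. field. repeat split; auto.
  - rewrite tech5, IH.
    change (q ^ S K) with (q * q ^ K). change (q ^ S (S K)) with (q * (q * q ^ K)).
    generalize (powne K). generalize (q ^ K). intros x Hx.
    unfold hh, Gc. rewrite S_INR. field. repeat split; auto. lra.
Qed.

Definition den (n : nat) := qn (2 * n + 1) * qn (2 * n + 3).
Definition W (n : nat) := Gc (q ^ (2 * n + 2)) (2 * n + 1) (q ^ (2 * n + 1)) * / den n.
Definition Sgen (c : R) (n : nat) :=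
  sum_f_R0 (fun k => (qn (2*n+2-k) * qn k + c * (qn (2*n+1-k) * qn (S k))) / den n) (2 * n + 1).

Lemma den_ne n : den n <> 0.
Proof.
  generalize qmq; intro N1.
  unfold den, qn. apply Rmult_integral_contrapositive; split;
    (unfold Rdiv; apply Rmult_integral_contrapositive; split;
     [apply qn_ne; lia | apply Rinv_neq_0_compat; auto]).
Qed.

Lemma Sgen_eq c n : Sgen c n = (1 + c) * W n.
Proof.
  generalize qmq q2ne q2ne'; intros N1 N2 N3.
  assert (Hq : q <> 0) by lra.
  assert (Hden := den_ne n).
  unfold Sgen, W.
  set (A := q ^ (2 * n + 2)).
  assert (HA : A <> 0) by apply powne.
  rewrite (sum_eq _ (fun k => (hh A (q ^ k) + c * hh A (q ^ S k)) * / den n)).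
  2:{ intros k Hk.
      replace (2 * n + 1 - k)%nat with (2 * n + 2 - S k)%nat by lia.
      unfold qn at 1 3. rewrite !pow_sub by lia. fold A. unfold hh.
      generalize (powne k) (powne (S k)). intros Hk1 Hk2.
      unfold qn. field. repeat split; auto. simpl in N2; lra. }
  rewrite <- scal_sum, FsumC by auto.
  replace (q ^ S (2 * n + 1)) with A by (unfold A; f_equal; lia).
  assert (hh A A = 0) by (unfold hh; unfold Rdiv; ring).
  rewrite H. ring.
Qed.

Definition Rn (n : nat) : R := INR (2 * n + 1) * q ^ (2 * n + 2) / (1 - q ^ (4 * n + 2)).

Lemma W_eq n : (1 - q ^ 2) * W n = Rn n - Rn (S n).
Proof.
  generalize qmq q2ne q2ne'; intros N1 N2 N3.
  assert (Hq : q <> 0) by lra.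
  unfold Rn, W, Gc, den, qn.
  replace (2 * S n + 1)%nat with (2 * n + 1 + 2)%nat by lia.
  replace (2 * S n + 2)%nat with (S (S (S (2 * n + 1))))%nat by lia.
  replace (4 * S n + 2)%nat with ((2 * n + 1) * 2 + 4)%nat by lia.
  replace (4 * n + 2)%nat with ((2 * n + 1) * 2)%nat by lia.
  replace (2 * n + 3)%nat with (S (S (2 * n + 1)))%nat by lia.
  replace (2 * n + 2)%nat with (S (2 * n + 1))%nat by lia.
  rewrite (pow_add q ((2*n+1)*2) 4), (pow_mult q (2*n+1) 2), (plus_INR (2*n+1) 2).
  cbn [pow].
  assert (Hx1 := qn_ne (2 * n + 1) ltac:(lia)).
  assert (Hx2 := qn_ne (S (S (2 * n + 1))) ltac:(lia)).
  assert (Hx3 : 1 - (q ^ (2 * n + 1)) ^ 2 <> 0).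
  { rewrite <- pow_mult. generalize (powlt1 ((2 * n + 1) * 2) ltac:(lia)). lra. }
  assert (Hx4 : 1 - (q ^ (2 * n + 1)) ^ 2 * q ^ 4 <> 0).
  { rewrite <- pow_mult, <- pow_add. generalize (powlt1 ((2 * n + 1) * 2 + 4) ltac:(lia)). lra. }
  cbn [pow] in Hx2.
  generalize (powne (2 * n + 1)). revert Hx1 Hx2 Hx3 Hx4.
  generalize (q ^ (2 * n + 1)). intros x Hx1 Hx2 Hx3 Hx4 Hx.
  cbn [pow] in *. replace (INR 2) with 2 by (simpl; lra).
  generalize (INR (2 * n + 1)). intro r.
  field. repeat split; auto; try (simpl in *; lra).
Qed.

Definition sumD (n : nat) := sum_f_R0 (D n) (2 * n + 1).

Lemma sumD_eq n : sumD n = Rn n - Rn (S n).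
Proof.
  rewrite <- W_eq.
  replace (1 - q ^ 2) with (1 + - q ^ 2) by ring. rewrite <- Sgen_eq.
  unfold sumD, Sgen. apply sum_eq. intros k Hk.
  rewrite D_nat by lia. fold (den n). unfold Rdiv. ring.
Qed.

Lemma bern n : q ^ n * (1 + INR n * (/ q - 1)) <= 1.
Proof.
  assert (Hqi : q * / q = 1) by (field; lra).
  assert (Hd : 0 < / q - 1).
  { assert (1 < / q) by (rewrite <- Rinv_1; apply Rinv_lt_contravar; lra). lra. }
  induction n as [|n IH].
  - simpl. lra.
  - rewrite S_INR. change (q ^ S n) with (q * q ^ n).
    assert (Hp := powpos n).
    assert (Hle : q ^ n <= 1).
    { destruct n; [simpl; lra | apply Rlt_le, powlt1; lia]. }
    assert (Hn := pos_INR n).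
    set (d := / q - 1) in *. set (y := q ^ n) in *.
    assert (q * (1 + d) = 1) by (unfold d; lra).
    replace (q * y * (1 + (INR n + 1) * d)) with (q * (y * (1 + INR n * d)) + q * d * y) by ring.
    assert (q * (y * (1 + INR n * d)) <= q) by nra.
    assert (q * d * y <= q * d) by nra.
    nra.
Qed.

Lemma div_le_helper a b c d : 0 < b -> 0 < d -> a * d <= c * b -> a / b <= c / d.
Proof.
  intros Hb Hd H.
  replace (a / b) with ((a * d) * / (b * d)) by (field; lra).
  replace (c / d) with ((c * b) * / (b * d)) by (field; lra).
  apply Rmult_le_compat_r; [apply Rlt_le, Rinv_0_lt_compat; nra | exact H].
Qed.

Lemma Rn_lim : is_lim_seq Rn 0.
Proof.
  set (e := Rmin (/ q - 1) 1).
  assert (Hd : 0 < / q - 1).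
  { assert (1 < / q) by (rewrite <- Rinv_1; apply Rinv_lt_contravar; lra). lra. }
  assert (He : 0 < e) by (apply Rmin_glb_lt; lra).
  assert (He1 : e <= / q - 1) by apply Rmin_l.
  assert (He2 : e <= 1) by apply Rmin_r.
  set (K := 2 / (e ^ 2 * (1 - q ^ 2))).
  assert (Hq2 : q ^ 2 < 1) by (apply powlt1; lia).
  assert (Hq2' : 0 < q ^ 2) by apply powpos.
  apply is_lim_seq_le_le with (u := fun _ => 0) (w := fun n => K * / INR (S n)).
  - intro n.
    assert (Hy := powpos n).
    assert (Hle : q ^ n <= 1).
    { destruct n; [simpl; lra | apply Rlt_le, powlt1; lia]. }
    assert (HB := bern n).
    assert (Hn := pos_INR n).
    assert (HP : (INR n + 1) * e * q ^ n <= 1).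
    { apply Rle_trans with (q ^ n * (1 + INR n * (/ q - 1))); [|exact HB].
      assert ((INR n + 1) * e <= 1 + INR n * (/ q - 1)) by nra. nra. }
    unfold Rn.
    replace (q ^ (2 * n + 2)) with (q ^ 2 * (q ^ n) ^ 2)
      by (rewrite pow_add, Nat.mul_comm, pow_mult; ring).
    replace (q ^ (4 * n + 2)) with (q ^ 2 * (q ^ n) ^ 4)
      by (rewrite pow_add, Nat.mul_comm, pow_mult; ring).
    replace (INR (2 * n + 1)) with (2 * INR n + 1) by (rewrite plus_INR, mult_INR; simpl; ring).
    rewrite S_INR.
    set (y := q ^ n) in *. set (Y := INR n) in *.
    assert (Hy2 : y ^ 2 <= 1) by nra.
    assert (Hy4 : y ^ 4 <= 1) by (replace (y ^ 4) with (y ^ 2 * y ^ 2) by ring; nra).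
    assert (Hy4' : 0 <= y ^ 4) by (replace (y ^ 4) with (y ^ 2 * y ^ 2) by ring; nra).
    assert (Hw1 : q ^ 2 * y ^ 4 <= q ^ 2) by nra.
    assert (Hw : 0 < 1 - q ^ 2 * y ^ 4) by lra.
    split.
    { apply Rdiv_le_0_compat; [|lra]. apply Rmult_le_pos; [lra|]. nra. }
    unfold K.
    replace (2 / (e ^ 2 * (1 - q ^ 2)) * / (Y + 1)) with (2 / (e ^ 2 * (1 - q ^ 2) * (Y + 1)))
      by (field; repeat split; try lra; apply pow_nonzero; lra).
    assert (He2p : 0 < e ^ 2) by (apply pow_lt; lra).
    apply div_le_helper; [lra | apply Rmult_lt_0_compat; [apply Rmult_lt_0_compat|]; lra|].
    assert (A1 : (2 * Y + 1) * (q ^ 2 * y ^ 2) * (e ^ 2 * (1 - q ^ 2) * (Y + 1))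
                 <= 2 * ((Y + 1) * e * y) ^ 2 * (q ^ 2 * (1 - q ^ 2))).
    { replace ((2 * Y + 1) * (q ^ 2 * y ^ 2) * (e ^ 2 * (1 - q ^ 2) * (Y + 1)))
        with ((2 * Y + 1) * (Y + 1) * ((e * y) ^ 2 * (q ^ 2 * (1 - q ^ 2)))) by ring.
      replace (2 * ((Y + 1) * e * y) ^ 2 * (q ^ 2 * (1 - q ^ 2)))
        with (2 * (Y + 1) * (Y + 1) * ((e * y) ^ 2 * (q ^ 2 * (1 - q ^ 2)))) by ring.
      apply Rmult_le_compat_r; [|nra].
      apply Rmult_le_pos; [apply pow2_ge_0 | nra]. }
    assert (HP0 : 0 <= (Y + 1) * e * y) by (apply Rmult_le_pos; [nra | lra]).
    assert (A2 : ((Y + 1) * e * y) ^ 2 <= 1) by nra.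
    assert (A3 : 0 <= q ^ 2 * (1 - q ^ 2)) by nra.
    nra.
  - apply is_lim_seq_const.
  - assert (H1 := is_lim_seq_inv _ _ (proj1 (is_lim_seq_incr_1 _ _) is_lim_seq_INR)
                    ltac:(discriminate)).
    simpl in H1.
    assert (H2 := is_lim_seq_scal_l _ K _ H1). simpl in H2.
    rewrite Rmult_0_r in H2. exact H2.
Qed.

Lemma series_tel : is_series (fun n => Rn n - Rn (S n)) (Rn 0).
Proof.
  assert (Hp : forall N, sum_n (fun n => Rn n - Rn (S n)) N = Rn 0 - Rn (S N)).
  { intro N. rewrite sum_n_Reals. induction N as [|N IH]; simpl; [ring|].
    simpl in IH. rewrite IH. ring. }
  assert (H : is_lim_seq (fun N => Rn 0 - Rn (S N)) (Rn 0 - 0)).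
  { apply is_lim_seq_minus'. apply is_lim_seq_const.
    apply (proj1 (is_lim_seq_incr_1 _ _) Rn_lim). }
  rewrite Rminus_0_r in H.
  apply (is_lim_seq_ext _ (sum_n (fun n => Rn n - Rn (S n)))) in H.
  2:{ intro N. symmetry. apply Hp. }
  exact H.
Qed.

Lemma qn_ge0 j : 0 <= qn j.
Proof.
  assert (Hp := powpos j).
  assert (Hle : q ^ j <= 1).
  { destruct j; [simpl; lra | apply Rlt_le, powlt1; lia]. }
  assert (H1 : 1 <= / q ^ j).
  { rewrite <- Rinv_1. apply Rinv_le_contravar; lra. }
  assert (H2 : 1 < / q) by (rewrite <- Rinv_1; apply Rinv_lt_contravar; lra).
  replace (qn j) with ((/ q ^ j - q ^ j) / (/ q - q)).
  - apply Rdiv_le_0_compat; lra.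
  - unfold qn. assert (H3 := qmq). field. repeat split; try apply powne; try lra; nra.
Qed.

Lemma den_pos n : 0 < den n.
Proof.
  generalize (den_ne n). unfold den. intro H.
  generalize (qn_ge0 (2 * n + 1)) (qn_ge0 (2 * n + 3)). intros. 
  assert (0 <= qn (2 * n + 1) * qn (2 * n + 3)) by (apply Rmult_le_pos; auto). lra.
Qed.

Lemma absD n k : (k <= 2 * n + 1)%nat ->
  Rabs (D n k) <= (qn (2*n+2-k) * qn k + q ^ 2 * (qn (2*n+1-k) * qn (S k))) / den n.
Proof.
  intro Hk. rewrite D_nat by lia. fold (den n).
  assert (Hd := den_pos n).
  assert (Ha : 0 <= qn (2*n+2-k) * qn k) by (apply Rmult_le_pos; apply qn_ge0).
  assert (Hb : 0 <= qn (2*n+1-k) * qn (S k)) by (apply Rmult_le_pos; apply qn_ge0).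
  set (a := qn (2*n+2-k) * qn k) in *. set (b := qn (2*n+1-k) * qn (S k)) in *.
  assert (Hid : 0 < / den n) by (apply Rinv_0_lt_compat; lra).
  assert (Hq2 : 0 < q ^ 2) by apply powpos.
  assert (U : 0 <= a * / den n) by nra.
  assert (V : 0 <= q ^ 2 * b * / den n).
  { apply Rmult_le_pos; [nra | lra]. }
  replace ((a - q ^ 2 * qn (2 * n + 1 - k) * qn (S k)) / den n)
    with (a * / den n - q ^ 2 * b * / den n) by (unfold b, Rdiv; ring).
  replace ((a + q ^ 2 * b) / den n) with (a * / den n + q ^ 2 * b * / den n) by (unfold Rdiv; ring).
  apply Rabs_le. lra.
Qed.

Lemma diag_eq x n : diag_shell (rho_minus q x) n = c_b x * sumD n.
Proof.
  unfold diag_shell, sumD. rewrite scal_sum. apply sum_eq. intros k Hk.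
  rewrite diag_rho by lia. ring.
Qed.

Lemma ex_sumD : ex_series sumD.
Proof.
  exists (Rn 0). apply (is_series_ext (fun n => Rn n - Rn (S n))).
  - intro n. symmetry. apply sumD_eq.
  - apply series_tel.
Qed.

Lemma ex_abs x : ex_series (absdiag_shell (rho_minus q x)).
Proof.
  assert (Hq2 : q ^ 2 < 1) by (apply powlt1; lia).
  apply (@ex_series_le R_AbsRing R_CompleteNormedModule _ (fun n => Rabs (c_b x) * Sgen (q ^ 2) n)).
  - intro n. change (norm (absdiag_shell (rho_minus q x) n))
      with (Rabs (absdiag_shell (rho_minus q x) n)).
    rewrite Rabs_pos_eq.
    2:{ apply cond_pos_sum. intro; apply Rabs_pos. }
    unfold absdiag_shell, Sgen. rewrite scal_sum. apply sum_Rle. intros k Hk.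
    rewrite diag_rho by lia. rewrite Rabs_mult, (Rmult_comm _ (Rabs (c_b x))).
    apply Rmult_le_compat_l; [apply Rabs_pos|]. apply absD; lia.
  - apply (ex_series_ext (fun n => scal (Rabs (c_b x) * (1 + q ^ 2) / (1 - q ^ 2)) (sumD n))).
    + intro n. rewrite Sgen_eq. rewrite sumD_eq, <- W_eq.
      change scal with Rmult. simpl. unfold mult. simpl. field. lra.
    + apply (@ex_series_scal_l R_AbsRing R_NormedModule). apply ex_sumD.
Qed.

Lemma Series_diag x : Series (diag_shell (rho_minus q x)) = c_b x * (q ^ 2 / (1 - q ^ 2)).
Proof.
  rewrite (Series_ext _ (fun n => c_b x * sumD n)) by apply diag_eq.
  rewrite Series_scal_l. f_equal.
  rewrite (Series_ext _ (fun n => Rn n - Rn (S n))) by apply sumD_eq.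
  rewrite (is_series_unique _ _ series_tel). unfold Rn. simpl. field.
  simpl in *. nra.
Qed.

Lemma main_sec :
  (forall i : nat, (i < 2)%nat ->
     ex_series (absdiag_shell (rho_minus q (pprime q i i)))) /\
  chern_pairing q (pprime q) = -1.
Proof using q hq0 hq1.
  split.
  - intros i _. apply ex_abs.
  - unfold chern_pairing, ch0, Trace. rewrite !Series_diag. simpl.
    field. split; [nra|lra].
Qed.
End S.

Theorem mainTheorem11 (q : R) (hq0 : 0 < q) (hq1 : q < 1) :
  (forall i : nat, (i < 2)%nat ->
     ex_series (absdiag_shell (rho_minus q (pprime q i i)))) /\
  chern_pairing q (pprime q) = -1.
Proof. exact (main_sec q hq0 hq1). Qed.
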